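(* Let $X$ be a Banach lattice and $S$ a convex $C_0$-semigroup on $X$. Let $(x_n)_{n\in\mathbb N}$, $(y_n)_{n\in\mathbb N}$ be sequences in $X$ with $x_n\to x\in X$ and $y_n\to y\in X$, and let $(h_n)_{n\in\mathbb N}$ be a sequence in $(0,\infty)$ with $h_n\downarrow0$. Then $S_{x_n}(h_n)y_n\to y$.
   Context: An operator $T\colon X\to X$ is convex if $T(\lambda x+(1-\lambda)y)\le\lambda Tx+(1-\lambda)Ty$ for all $x,y\in X$, $\lambda\in[0,1]$, and bounded if $\sup_{\|x\|\le r}\|Tx\|<\infty$ for all $r>0$. A convex $C_0$-semigroup is a family $(S(t))_{t\ge0}$ of bounded convex operators $X\to X$ with $S(0)=\mathrm{id}$, $S(t+s)=S(t)S(s)$ for all $s,t\ge0$, and $S(t)x\to x$ as $t\downarrow0$ for all $x$. For $t\ge0$ and $x,y\in X$, $S_x(t)y:=S(t)(x+y)-S(t)x$. *)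

(* Defs.v *)
From HB Require Import structures.
From mathcomp Require Import all_boot all_order all_algebra.
From mathcomp Require Import all_classical all_reals all_analysis.
Set Implicit Arguments. Unset Strict Implicit. Unset Printing Implicit Defensive.
Import Order.TTheory GRing.Theory Num.Theory.
Import numFieldNormedType.Exports.
Local Open Scope ring_scope.
Local Open Scope classical_set_scope.

Record banach_lattice (R : realType) (X : completeNormedModType R) := BanachLattice {
  bl_le : X -> X -> Prop;
  bl_join : X -> X -> X;
  bl_le_refl : forall x, bl_le x x;
  bl_le_anti : forall x y, bl_le x y -> bl_le y x -> x = y;
  bl_le_trans : forall x y z, bl_le x y -> bl_le y z -> bl_le x z;
  bl_join_ubl : forall x y, bl_le x (bl_join x y);
  bl_join_ubr : forall x y, bl_le y (bl_join x y);
  bl_join_least : forall x y z, bl_le x z -> bl_le y z -> bl_le (bl_join x y) z;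
  bl_le_add : forall x y z, bl_le x y -> bl_le (x + z) (y + z);
  bl_le_scale : forall (a : R) x y, 0 <= a -> bl_le x y -> bl_le (a *: x) (a *: y);
  bl_norm_mono : forall x y,
    bl_le (bl_join x (- x)) (bl_join y (- y)) -> `|x| <= `|y|
}.

Section Ops.
Variables (R : realType) (X : completeNormedModType R) (L : banach_lattice X).

Definition convex_op (T : X -> X) : Prop :=
  forall (x y : X) (l : R), 0 <= l -> l <= 1 ->
    bl_le L (T (l *: x + (1 - l) *: y)) (l *: T x + (1 - l) *: T y).

Definition bounded_op (T : X -> X) : Prop :=
  forall r : R, 0 < r -> exists M : R, forall x : X, `|x| <= r -> `|T x| <= M.

(* Convex C_0-semigroup; S t is only relevant for t >= 0. *)
Definition convex_C0_semigroup (S : R -> X -> X) : Prop :=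
  [/\ (forall t : R, 0 <= t -> convex_op (S t) /\ bounded_op (S t)),
      S 0 = id,
      (forall s t : R, 0 <= s -> 0 <= t -> S (t + s) = S t \o S s)
    & (forall x : X, S t x @[t --> 0^'+] --> x)].

Definition S_at (S : R -> X -> X) (x : X) (t : R) (y : X) : X :=
  S t (x + y) - S t x.

End Ops.

(* Main.v *)
Require Import Defs.
From HB Require Import structures.
From mathcomp Require Import all_boot all_order all_algebra.
From mathcomp Require Import all_classical all_reals all_analysis.
From mathcomp Require Import ring lra.
Import Order.TTheory GRing.Theory Num.Theory.
Import numFieldNormedType.Exports.
Local Open Scope ring_scope.
Local Open Scope classical_set_scope.

Lemma blle_addl {R : realType} {X : completeNormedModType R} {L : banach_lattice X}
  {x y : X} (z : X) : bl_le L x y -> bl_le L (z + x) (z + y).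
Proof. by move=> /(bl_le_add z); rewrite ![_ + z]addrC. Qed.

Lemma blle_add2 {R : realType} {X : completeNormedModType R} {L : banach_lattice X}
  {a b c d : X} : bl_le L a b -> bl_le L c d -> bl_le L (a + c) (b + d).
Proof.
move=> /(bl_le_add c) H1 /(blle_addl b) H2; exact: bl_le_trans H1 H2.
Qed.

Lemma blle_opp {R : realType} {X : completeNormedModType R} {L : banach_lattice X}
  {x y : X} : bl_le L x y -> bl_le L (- y) (- x).
Proof.
move=> /(bl_le_add (- x - y)).
by rewrite addrA subrr add0r addrCA subrr addr0.
Qed.

Lemma blle_subr {R : realType} {X : completeNormedModType R} {L : banach_lattice X}
  {x y z : X} : bl_le L (x - z) y -> bl_le L x (y + z).
Proof. by move=> /(bl_le_add z); rewrite subrK. Qed.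

Definition blabs {R : realType} {X : completeNormedModType R} (L : banach_lattice X)
  (u : X) := bl_join L u (- u).

Lemma blabs_ge0 {R : realType} {X : completeNormedModType R} {L : banach_lattice X}
  (u : X) : bl_le L 0 (blabs L u).
Proof.
have H := blle_add2 (bl_join_ubl L u (- u)) (bl_join_ubr L u (- u)).
rewrite subrr in H.
have := bl_le_scale (_ : 0 <= 2^-1 :> R) H.
rewrite scaler0 -mulr2n -[X in _ *: X]scaler_nat scalerA mulVf ?pnatr_eq0 // scale1r; apply.
by rewrite invr_ge0.
Qed.

Lemma blabs_id {R : realType} {X : completeNormedModType R} {L : banach_lattice X}
  {v : X} : bl_le L 0 v -> blabs L v = v.
Proof.
move=> v0; apply: bl_le_anti; last exact: bl_join_ubl.
apply: bl_join_least; first exact: bl_le_refl.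
have := blle_opp v0; rewrite oppr0 => H; exact: bl_le_trans H v0.
Qed.

Lemma blabs_norm {R : realType} {X : completeNormedModType R} {L : banach_lattice X}
  (u : X) : `|blabs L u| = `|u|.
Proof.
have E := blabs_id (blabs_ge0 (L:=L) u).
apply/eqP; rewrite eq_le; apply/andP; split; apply: (bl_norm_mono (b:=L)).
  by change (bl_le L (blabs L (blabs L u)) (blabs L u)); rewrite E; exact: bl_le_refl.
by change (bl_le L (blabs L u) (blabs L (blabs L u))); rewrite E; exact: bl_le_refl.
Qed.

Lemma blnorm_le {R : realType} {X : completeNormedModType R} {L : banach_lattice X}
  {u v : X} : bl_le L 0 u -> bl_le L u v -> `|u| <= `|v|.
Proof.
move=> u0 uv; have v0 := bl_le_trans u0 uv.
apply: (bl_norm_mono (b:=L)); change (bl_le L (blabs L u) (blabs L v)).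
by rewrite !blabs_id.
Qed.

Lemma bl_sandwich {R : realType} {X : completeNormedModType R} {L : banach_lattice X}
  {a b c : X} : bl_le L a c -> bl_le L c b -> `|c| <= `|a| + `|b|.
Proof.
move=> ac cb.
have a0 := blabs_ge0 (L:=L) a; have b0 := blabs_ge0 (L:=L) b.
have v0 : bl_le L 0 (blabs L a + blabs L b).
  by have := blle_add2 a0 b0; rewrite addr0.
have H : bl_le L (blabs L c) (blabs L a + blabs L b).
  apply: bl_join_least.
    apply: bl_le_trans cb _; apply: bl_le_trans (bl_join_ubl L b (- b)) _.
    by have := blle_addl (blabs L b) a0; rewrite addr0 addrC.
  apply: bl_le_trans (blle_opp ac) _; apply: bl_le_trans (bl_join_ubr L a (- a)) _.
  by have := blle_addl (blabs L a) b0; rewrite addr0.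
rewrite -(blabs_norm (L:=L) c) -(blabs_norm (L:=L) a) -(blabs_norm (L:=L) b).
apply: le_trans (blnorm_le (blabs_ge0 (L:=L) c) H) _; exact: ler_normD.
Qed.
Lemma conv_lip1 {R : realType} {X : completeNormedModType R} {L : banach_lattice X}
  (T : X -> X) (p : X) (rho M : R) :
  convex_op L T -> 0 < rho ->
  (forall z, `|z - p| <= 2 * rho -> `|T z| <= M) ->
  forall z1 z2, `|z1 - p| <= rho -> `|z2 - p| <= rho ->
  exists b, bl_le L (T z1 - T z2) b /\ `|b| <= 2 * M / rho * `|z1 - z2|.
Proof.
move=> cT rho0 HM z1 z2 h1 h2.
have M0 : 0 <= M.
  apply: le_trans (HM p _) => //; by rewrite subrr normr0 mulr_ge0 // ltW.
have [->|nz] := eqVneq z1 z2.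
  exists 0; rewrite !subrr normr0 mulr0 lexx; split => //; exact: bl_le_refl.
set d := `|z1 - z2|.
have d0 : 0 < d by rewrite normr_gt0 subr_eq0.
set l := d / (d + rho).
have dr0 : 0 < d + rho by rewrite addr_gt0.
have l0 : 0 <= l by rewrite divr_ge0 // ltW.
have l1 : l <= 1 by rewrite ler_pdivrMr // mul1r lerDl ltW.
have ld : l <= d / rho by rewrite ler_pM2l // lef_pV2 ?posrE // lerDr ltW.
set w := z1 + (rho / d) *: (z1 - z2).
have hw : `|w - p| <= 2 * rho.
  rewrite /w addrAC; apply: le_trans (ler_normD _ _) _.
  rewrite normrZ ger0_norm; last by rewrite divr_ge0 // ltW.
  rewrite -/d divfK ?gt_eqF // mulr2n mulrDl mul1r.
  by rewrite lerD2r.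
have idw : l *: w + (1 - l) *: z2 = z1.
  have E : l * (rho / d) = 1 - l.
    rewrite /l; field; rewrite ?gt_eqF //.
  rewrite /w scalerDr scalerA E scalerBr addrA.
  by rewrite subrK -scalerDl addrC subrK scale1r.
have C := cT w z2 l l0 l1; rewrite idw in C.
exists (l *: (T w - T z2)); split.
  have := bl_le_add (- T z2) C.
  suff -> : l *: T w + (1 - l) *: T z2 - T z2 = l *: (T w - T z2) by [].
  by rewrite scalerBr scalerBl scale1r addrAC addrA subrK.
rewrite normrZ ger0_norm //.
have HT : `|T w - T z2| <= M + M.
  apply: le_trans (ler_normB _ _) _; apply: lerD; apply: HM => //.
  by apply: le_trans h2 _; rewrite ler_pMl // ler1n.
apply: le_trans (ler_wpM2l l0 HT) _.
apply: le_trans (ler_wpM2r _ ld) _; first by rewrite addr_ge0.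
rewrite le_eqVlt; apply/orP; left; apply/eqP; field; by rewrite gt_eqF.
Qed.

Lemma conv_lip {R : realType} {X : completeNormedModType R} {L : banach_lattice X}
  (T : X -> X) (p : X) (rho M : R) :
  convex_op L T -> 0 < rho ->
  (forall z, `|z - p| <= 2 * rho -> `|T z| <= M) ->
  forall z1 z2, `|z1 - p| <= rho -> `|z2 - p| <= rho ->
  `|T z1 - T z2| <= 4 * M / rho * `|z1 - z2|.
Proof.
move=> cT rho0 HM z1 z2 h1 h2.
have [b [Hb nb]] := @conv_lip1 _ _ L T p rho M cT rho0 HM z1 z2 h1 h2.
have [b' [Hb' nb']] := @conv_lip1 _ _ L T p rho M cT rho0 HM z2 z1 h2 h1.
have Hl := blle_opp Hb'; rewrite opprB in Hl.
apply: le_trans (bl_sandwich Hl Hb) _.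
rewrite normrN; rewrite distrC in nb'.
apply: le_trans (lerD nb' nb) _.
rewrite le_eqVlt; apply/orP; left; apply/eqP; field; by rewrite gt_eqF.
Qed.

Lemma conv_cont {R : realType} {X : completeNormedModType R} {L : banach_lattice X}
  (T : X -> X) : convex_op L T -> bounded_op T -> continuous T.
Proof.
move=> cT bT p.
have [M HM] := bT (`|p| + 2) (ltr_wpDl (normr_ge0 _) (ltr0n _ 2)).
have HM' : forall z, `|z - p| <= 2 * 1 -> `|T z| <= M.
  move=> z hz; apply: HM; have := ler_normD (z - p) p; rewrite subrK => H.
  by apply: le_trans H _; rewrite addrC lerD2l; rewrite mulr1 in hz.
have M0 : 0 <= M by apply: le_trans (HM' p _) => //; rewrite subrr normr0 mulr_ge0.
apply/cvgrPdist_lt => e e0.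
set K0 := 4 * M / 1.
have K00 : 0 <= K0 by rewrite /K0 divr1 mulr_ge0.
have d0 : 0 < Num.min 1 (e / (K0 + 1)).
  by rewrite lt_min ltr01 /= divr_gt0 // ltr_wpDl.
apply/nbhs_normP; exists (Num.min 1 (e / (K0 + 1))) => // z /=.
rewrite lt_min => /andP[hz1 hz2].
have := @conv_lip _ _ L T p 1 M cT ltr01 HM' p z.
rewrite subrr normr0 ler01 distrC (ltW hz1) -/K0 => /(_ isT isT) H.
apply: le_lt_trans H _.
set a := `|p - z| in hz1 hz2 *.
set c := e / (K0 + 1) in hz2.
have ec : e = c * (K0 + 1) by rewrite /c divfK // gt_eqF // ltr_wpDl.
have c0 : 0 < c by rewrite /c divr_gt0 // ltr_wpDl.
have a0 : 0 <= a by exact: normr_ge0.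
rewrite ec; nra.
Qed.

Lemma baire_ball {R : realType} {X : completeNormedModType R} {L : banach_lattice X}
  (T : nat -> X -> X) :
  (forall k, convex_op L (T k)) -> (forall k, bounded_op (T k)) ->
  (forall q, exists Mq, forall k, `|T k q| <= Mq) ->
  exists (n : nat) (x0 : X) (r : R), 0 < r /\
    forall k z, ball x0 r z -> `|T k z| <= n%:R.
Proof.
move=> cT bT BoundedF.
set O := fun n : nat => \bigcup_(k in [set: nat]) (fun z => `|T k z|)@^-1` [set y | y > n%:R].
have O_open : forall n, open ( O n ).
  move=> n; apply: bigcup_open => i _.
  apply: (@open_comp _ _ (fun z => `|T i z|) [set y | y > n%:R]); last first.
    exact: open_gt.
  move=> x Hx; apply: continuous_comp; last exact: norm_continuous.
  exact: (@conv_cont _ _ L (T i) (cT i) (bT i) x).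
set O_inf := \bigcap_i (O i).
have O_infempty : O_inf = set0.
  rewrite -subset0 => x.
  have [M FxM] := BoundedF x; rewrite /O_inf /O /=.
  move=> /(_ (Num.truncn M).+1 Logic.I)[f _]; apply/negP; rewrite -leNgt.
  by apply/ltW; rewrite -truncn_le_nat le_truncn ?FxM.
have ContraBaire : exists i, not (dense (O i)).
  have dOinf : ~ dense O_inf.
    rewrite /dense O_infempty ; apply /existsNP; exists setT; elim.
    - by move=> x; rewrite setI0.
    - by exists point.
    - exact: openT.
  have /contra_not/(_ dOinf) :
      (forall i, open (O i) /\ dense (O i)) -> dense (O_inf).
    exact: Baire.
  move=> /asboolPn /existsp_asboolPn[n /and_asboolP /nandP Hn].
  by exists n; case: Hn => /asboolPn.
have [n [x0 [r H]]] :
    exists n x (r : {posnum R}), (ball x r%:num) `<=` (~` (O n)).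
  move: ContraBaire =>
  [i /(denseNE) [ O0 [ [ x /open_nbhs_nbhs /nbhs_ballP [r r0 bxr]
   /((@subsetI_eq0 _ (ball x r) O0 (O i) (O i)))]]]] /(_ bxr) bxrOi.
  by exists i, x, (PosNum r0); apply/disjoints_subset/bxrOi.
exists n, x0, r%:num; split => // k z /H.
rewrite /O setC_bigcup /= => /(_ k Logic.I).
by rewrite leNgt => /negP.
Qed.

Lemma half_conv {R : realType} {X : completeNormedModType R} {L : banach_lattice X}
  (T : X -> X) (a b : X) : convex_op L T ->
  bl_le L (T (2^-1 *: a + 2^-1 *: b)) (2^-1 *: T a + 2^-1 *: T b).
Proof.
move=> cT; have E : 1 - 2^-1 = 2^-1 :> R by field.
have := cT a b 2^-1; rewrite E; apply; rewrite ?invr_ge0 ?invf_le1 ?ler1n //.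
Qed.

Lemma unif_local {R : realType} {X : completeNormedModType R} {L : banach_lattice X}
  (T : nat -> X -> X) :
  (forall k, convex_op L (T k)) -> (forall k, bounded_op (T k)) ->
  (forall q, exists Mq, forall k, `|T k q| <= Mq) ->
  forall p, exists rho M, 0 < rho /\
    forall k z, `|z - p| <= 2 * rho -> `|T k z| <= M.
Proof.
move=> cT bT BF p.
have [n [x0 [r [r0 Hb]]]] := @baire_ball _ _ L T cT bT BF.
set q := 2 *: p - x0.
have [Mq HMq] := BF q; have [Mp HMp] := BF p.
have up : forall k z, `|z - p| < r / 2 -> exists b, bl_le L (T k z) b /\
    `|b| <= 2^-1 * Mq + 2^-1 * n%:R.
  move=> k z hz; set w := x0 + 2 *: (z - p).
  have hw : ball x0 r w.
    rewrite -ball_normE /ball_ /= /w opprD addrA subrr add0r normrN normrZ.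
    by rewrite ger0_norm // -ltr_pdivlMl // mulrC.
  have idz : 2^-1 *: q + 2^-1 *: w = z.
    rewrite -scalerDr /q /w addrA subrK scalerBr addrC subrK scalerA mulVf ?scale1r //.
  exists (2^-1 *: T k q + 2^-1 *: T k w); split.
    by rewrite -{1}idz; exact: half_conv.
  apply: le_trans (ler_normD _ _) _; rewrite !normrZ ger0_norm ?invr_ge0 //.
  apply: lerD; apply: ler_wpM2l; rewrite ?invr_ge0 //. exact: Hb.
exists (r / 8), (2 * Mp + (2^-1 * Mq + 2^-1 * n%:R) + (2^-1 * Mq + 2^-1 * n%:R)).
split; first by rewrite divr_gt0.
move=> k z hz.
have hz' : `|z - p| < r / 2 by apply: le_lt_trans hz _; rewrite mulrA; lra.
have [b [Hb1 nb]] := up k z hz'.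
set z' := 2 *: p - z.
have hz2 : `|z' - p| < r / 2.
  by rewrite /z' scaler_nat mulr2n addrAC addrK distrC.
have [b' [Hb' nb']] := up k z' hz2.
have mid : 2^-1 *: z + 2^-1 *: z' = p.
  rewrite -scalerDr /z' addrC subrK scalerA mulVf ?scale1r // pnatr_eq0.
have C := @half_conv _ _ L (T k) z z' (cT k); rewrite mid in C.
have C2 := bl_le_scale (ler0n R 2) C.
rewrite -scalerDr scalerA mulfV ?pnatr_eq0 // scale1r in C2.
have C3 := bl_le_add (- T k z') C2; rewrite addrK in C3.
have C4 := blle_addl (2 *: T k p) (blle_opp Hb').
have La := bl_le_trans C4 C3.
apply: le_trans (bl_sandwich La Hb1) _.
apply: lerD; last exact: nb.
apply: le_trans (ler_normB _ _) _.
apply: lerD => //.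
by rewrite normrZ ger0_norm // ler_wpM2l.
Qed.
Lemma zmod_id (V : zmodType) (A B U W x y : V) :
  (A - B) - y = (A - U) + (W - B) + ((U - (x + y)) - (W - x)).
Proof.
rewrite opprB opprD !addrA.
rewrite (addrAC _ (- y) x) subrK.
rewrite (addrAC (A - U) W) (addrAC _ W U) (addrAC _ W (-y)) addrK.
by rewrite (addrAC (A - U) (- B) U) subrK.
Qed.

Theorem corollary2p6 (R : realType) (X : completeNormedModType R)
  (L : banach_lattice X) (S : R -> X -> X)
  (xs ys : nat -> X) (x y : X) (h : nat -> R) :
  convex_C0_semigroup L S ->
  xs @ \oo --> x ->
  ys @ \oo --> y ->
  (forall n, 0 < h n) ->
  (forall n, h n.+1 <= h n) ->
  h @ \oo --> 0 ->
  (fun n => S_at S (xs n) (h n) (ys n)) @ \oo --> y.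
Proof.
move=> [Hc S0 Ssg Scont] xsx ysy hpos _ h0.
set T := fun k => S (h k).
have cT : forall k, convex_op L (T k) by move=> k; exact: (Hc _ (ltW (hpos k))).1.
have bT : forall k, bounded_op (T k) by move=> k; exact: (Hc _ (ltW (hpos k))).2.
have hR : h @ \oo --> (0 : R)^'+.
  move=> A /= HA; have := h0 _ HA.
  case=> N _ HN; exists N => // n /HN /=; apply; exact: hpos.
have Sh : forall z, (fun k => T k z) @ \oo --> z.
  move=> z; exact: (cvg_comp _ _ hR (Scont z)).
have BF : forall q, exists Mq, forall k, `|T k q| <= Mq.
  move=> q; have [M _ HM] := ex_strict_bound_gt0 (cvg_seq_bounded (cvgP _ (Sh q))).
  by exists M => k; exact: ltW (HM k Logic.I).
have [rho1 [M1 [r1 HM1]]] := @unif_local _ _ L T cT bT BF (x + y).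
have [rho2 [M2 [r2 HM2]]] := @unif_local _ _ L T cT bT BF x.
have M10 : 0 <= M1 by apply: le_trans (HM1 0%N (x + y) _) => //; rewrite subrr normr0 mulr_ge0 // ltW.
have M20 : 0 <= M2 by apply: le_trans (HM2 0%N x _) => //; rewrite subrr normr0 mulr_ge0 // ltW.
set K1 := 4 * M1 / rho1; set K2 := 4 * M2 / rho2.
have K10 : 0 <= K1 by rewrite /K1 divr_ge0 ?mulr_ge0 // ltW.
have K20 : 0 <= K2 by rewrite /K2 divr_ge0 ?mulr_ge0 // ltW.
apply/cvgrPdist_lt => e e0.
set D := 8 * (K1 + K2 + 1).
have D0 : 0 < D by rewrite /D mulr_gt0 // ltr_wpDl // addr_ge0.
set c := e / D.
have c0 : 0 < c by rewrite divr_gt0.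
have cD : c * D = e by rewrite /c divfK // gt_eqF.
set d := Num.min (Num.min (rho1 / 2) rho2) c.
have d0 : 0 < d by rewrite !lt_min !divr_gt0 ?r1 ?r2 ?c0.
have dr1 : d <= rho1 / 2 by rewrite /d !ge_min lexx.
have dr2 : d <= rho2 by rewrite /d !ge_min lexx orbT.
have dc : d <= c by rewrite /d ge_min lexx orbT.
have e4 : 0 < e / 4 by rewrite divr_gt0.
near=> k.
have ha : `|x - xs k| < d by near: k; exact: cvgr_dist_lt xsx d d0.
have hb : `|y - ys k| < d by near: k; exact: cvgr_dist_lt ysy d d0.
have hu : `|x + y - T k (x + y)| < e / 4 by near: k; exact: cvgr_dist_lt (Sh (x + y)) _ e4.
have hw : `|x - T k x| < e / 4 by near: k; exact: cvgr_dist_lt (Sh x) _ e4.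
rewrite /S_at -/(T k) distrC (zmod_id _ _ _ (T k (x + y)) (T k x) x y).
have hab : `|xs k + ys k - (x + y)| <= `|x - xs k| + `|y - ys k|.
  rewrite -normrN opprB opprD addrACA; exact: ler_normD.
have L1 := @conv_lip _ _ L (T k) (x + y) rho1 M1 (cT k) r1 (HM1 k) (xs k + ys k) (x + y).
have L2 := @conv_lip _ _ L (T k) x rho2 M2 (cT k) r2 (HM2 k) x (xs k).
have L1' : `|T k (xs k + ys k) - T k (x + y)| <= K1 * `|xs k + ys k - (x + y)|.
  apply: L1; last by rewrite subrr normr0 ltW.
  apply: le_trans hab _; lra.
have L2' : `|T k x - T k (xs k)| <= K2 * `|x - xs k|.
  apply: L2; first by rewrite subrr normr0 ltW.
  by rewrite distrC; apply: le_trans dr2; exact: ltW.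
set a := `|x - xs k| in ha hab L2'.
set b := `|y - ys k| in hb hab.
set g := `|xs k + ys k - (x + y)| in hab L1'.
have a0 : 0 <= a by exact: normr_ge0.
have b0 : 0 <= b by exact: normr_ge0.
have g0 : 0 <= g by exact: normr_ge0.
rewrite distrC in hu; rewrite distrC in hw.
apply: le_lt_trans (ler_normD _ _) _.
apply: le_lt_trans (lerD (ler_normD _ _) (ler_normB _ _)) _.
have P1 : K1 * g <= K1 * (2 * c) by apply: ler_wpM2l => //; lra.
have P2 : K2 * a <= K2 * c by apply: ler_wpM2l => //; lra.
have P3 : (K1 * (2 * c)) + K2 * c <= e / 4.
  rewrite -cD /D; nra.
lra.
Unshelve. all: by end_near.
Qed.
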